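(* Let $T$ be an AVL tree with $n$ nodes, let $a$ be its number of depth-0 nodes (leaves), $b$ its number of depth-1 nodes and $b_2$ its number of balanced depth-1 nodes, and set $\alpha=a/n$ and $\beta_2=b_2/b$. If $\alpha\le 0.4$, then \[\beta_2\le\frac{3\alpha-1}{1-\alpha}.\]
   Context: An AVL tree is a binary tree (each node has an optional left and an optional right child) such that at every node the heights of the left and right subtrees differ by at most $1$, where the height of a tree is the number of edges on a longest root-to-leaf path and the empty tree has height $-1$. The depth of a node is the height of the subtree rooted at that node. A node is balanced if its left and right subtrees have equal height, and unbalanced otherwise; thus a balanced depth-1 node has two leaf children and an unbalanced depth-1 node has exactly one (leaf) child. *)

(* Defs.v *)
From mathcomp Require Import all_boot all_order all_algebra.
Set Implicit Arguments. Unset Strict Implicit. Unset Printing Implicit Defensive.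
Import Order.TTheory GRing.Theory Num.Theory.

(* Binary trees: [Leaf] is the empty tree, [Node l r] a node with
   (optional, i.e. possibly empty) left and right subtrees. *)
Inductive tree : Type := Leaf | Node of tree & tree.

Fixpoint hgt (t : tree) : nat :=
  match t with Leaf => 0 | Node l r => (maxn (hgt l) (hgt r)).+1 end.

Definition height (t : tree) : int := (hgt t)%:Z - 1.

Fixpoint is_avl (t : tree) : bool :=
  match t with
  | Leaf => true
  | Node l r => [&& is_avl l, is_avl r & `|height l - height r| <= 1]%R
  end.

Fixpoint count_nodes (P : tree -> bool) (t : tree) : nat :=
  match t with
  | Leaf => 0
  | Node l r => P t + count_nodes P l + count_nodes P r
  end.

Definition is_node (t : tree) : bool := if t is Node _ _ then true else false.

(* depth of a node = height of its subtree *)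
Definition has_depth (d : int) (t : tree) : bool := is_node t && (height t == d).

Definition is_balanced (t : tree) : bool :=
  if t is Node l r then height l == height r else false.

Definition num_nodes (t : tree) : nat := count_nodes is_node t.
Definition num_depth0 (t : tree) : nat := count_nodes (has_depth 0) t.
Definition num_depth1 (t : tree) : nat := count_nodes (has_depth 1) t.
Definition num_bal_depth1 (t : tree) : nat :=
  count_nodes (fun s => has_depth 1 s && is_balanced s) t.

(* Main.v *)
Require Import Defs.
From mathcomp Require Import all_boot all_order all_algebra zify ring lra.
Import Order.TTheory GRing.Theory Num.Theory.

Lemma hd0 t : has_depth 0%R t = (hgt t == 1)%N.
Proof. case: t => [|l r] //=; rewrite /has_depth /height /=. lia. Qed.
Lemma hd1 t : has_depth 1%R t = (hgt t == 2)%N.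
Proof. case: t => [|l r] //=; rewrite /has_depth /height /=. lia. Qed.
Lemma balE l r : is_balanced (Node l r) = (hgt l == hgt r).
Proof. rewrite /= /height. lia. Qed.
Lemma avlE l r : is_avl (Node l r) =
  [&& is_avl l, is_avl r, (hgt l <= (hgt r).+1)%N & (hgt r <= (hgt l).+1)%N].
Proof. rewrite /= /height. case: (is_avl l) (is_avl r) => [] [] //=. lia. Qed.
Lemma hgt0 t : hgt t = 0%N -> t = Leaf. Proof. by case: t. Qed.
Lemma hgt1 t : hgt t = 1%N -> t = Node Leaf Leaf.
Proof. case: t => [|l r] //= [] H; case: l H => [|? ?] /=; case: r => [|? ?] //=; lia. Qed.
Lemma cnE P l r : count_nodes P (Node l r) = (P (Node l r) + count_nodes P l + count_nodes P r)%N.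
Proof. by []. Qed.

Lemma cnB l r : count_nodes (fun s => has_depth 1 s && is_balanced s) (Node l r) =
  (((hgt (Node l r) == 2) && (hgt l == hgt r)) + count_nodes (fun s => has_depth 1 s && is_balanced s) l
   + count_nodes (fun s => has_depth 1 s && is_balanced s) r)%N.
Proof. by rewrite cnE hd1 balE. Qed.

Definition inv t := 
  (num_nodes t + is_node t + num_bal_depth1 t = 2 * num_depth0 t + num_depth1 t)%N
  /\ (num_depth1 t + num_bal_depth1 t <= num_depth0 t)%N /\ (num_bal_depth1 t <= num_depth1 t)%N.

Lemma inv_small : inv Leaf /\ inv (Node Leaf Leaf). Proof. by vm_compute. Qed.

Lemma isn t : is_node t = (0 < hgt t)%N. Proof. by case: t. Qed.
Lemma small t : (hgt t <= 1)%N ->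
  [/\ num_nodes t = hgt t, num_depth0 t = hgt t, num_depth1 t = 0%N & num_bal_depth1 t = 0%N].
Proof.
case Et: (hgt t) => [|[|k]] // _.
  by rewrite (hgt0 _ Et).
by rewrite (hgt1 _ Et).
Qed.

Lemma key t : is_avl t -> inv t.
Proof.
elim: t => [|l IHl r IHr]; first by case: inv_small.
rewrite avlE => /and4P[al ar hlr hrl].
have {IHl}IHl := IHl al; have {IHr}IHr := IHr ar.
move: (small l) (small r) (isn l) (isn r) IHl IHr hlr hrl.
rewrite /inv /num_nodes /num_depth0 /num_depth1 /num_bal_depth1 cnB !cnE hd0 hd1 /=.
move=> Sl Sr -> ->.
case: (hgt l) Sl => [|[|hl]] Sl; case: (hgt r) Sr => [|[|hr]] Sr /=; 
 try (case/(_ isT): Sl => ? ? ? ?); try (case/(_ isT): Sr => ? ? ? ?);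
 rewrite ?maxnn ?max0n ?maxn0 /=;
 repeat (case: eqP => ? /=); lia.
Qed.

Local Open Scope ring_scope.
Theorem lemma2 (T : tree) :
  is_avl T -> (0 < num_nodes T)%N ->
  (num_depth0 T)%:R / (num_nodes T)%:R <= 2%:R / 5%:R :> rat ->
  (num_bal_depth1 T)%:R / (num_depth1 T)%:R
    <= (3%:R * ((num_depth0 T)%:R / (num_nodes T)%:R) - 1)
       / (1 - (num_depth0 T)%:R / (num_nodes T)%:R) :> rat.
Proof.
move=> /key [E [H1 H2]] n0.
have isT : is_node T = true by case: T n0 E H1 H2.
rewrite isT in E.
move: E H1 H2 n0.
set n := num_nodes T; set a := num_depth0 T; set b := num_depth1 T; set c := num_bal_depth1 T.
clearbody n a b c => E H1 H2 n0.
have En : (n%:R : rat) + 1 + c%:R = 2 * a%:R + b%:R.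
  by rewrite -(natrD _ n 1) -natrD E natrD natrM.
have H1' : (b%:R : rat) + c%:R <= a%:R by rewrite -natrD ler_nat.
have H2' : (c%:R : rat) <= b%:R by rewrite ler_nat.
have np : (0 : rat) < n%:R by rewrite ltr0n.
have c0 : (0 : rat) <= c%:R by [].
have a0 : (0 : rat) <= a%:R by [].
clear E H1 H2 n0 isT.
have -> : 3%:R * (a%:R / n%:R) - 1 = (3 * a%:R - n%:R) / n%:R :> rat.
  by field; lra.
have -> : 1 - (a%:R / n%:R) = (n%:R - a%:R) / n%:R :> rat.
  by field; lra.
rewrite ler_pdivrMr // => Ha.
have nap : (0 : rat) < n%:R - a%:R by lra.
have -> : (3 * a%:R - n%:R) / n%:R / ((n%:R - a%:R) / n%:R) = (3 * a%:R - n%:R) / (n%:R - a%:R) :> rat.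
  by field; lra.
have [b0|bp] := eqVneq b 0%N.
  rewrite b0 invr0 mulr0; apply: divr_ge0; lra.
have bp' : (0 : rat) < b%:R by rewrite ltr0n lt0n.
rewrite ler_pdivrMr // mulrAC ler_pdivlMr //.
have hint : 0 <= (a%:R - b%:R - c%:R) * (b%:R - c%:R) :> rat.
  apply: mulr_ge0; lra.
nra.
Qed.
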